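(* For every word $w\in\mathcal{M}_n^e$, \[ Hw=Q_+Q_-^{-1}w=\sum_{w'\ge w}\ \sum_{T\subseteq E^y_{w'}}(-1)^{|T|}\psi^y_Tw', \] where $w'$ ranges over words of $\mathcal{M}_n^e$ with $w'\ge w$.
   Context: $\mathcal{M}_n^e$ is the set of words in letters $x,y$ with $n_x$ $x$'s and $n_y$ $y$'s ($n=n_x+n_y$, $e=n_y-n_x$), $\mathcal{F}_n^e$ its $\mathbb{Z}$-span. $w_0\le w_1$ iff for each $i$ the $i$-th $x$ of $w_0$ is at a position $\le$ that of the $i$-th $x$ of $w_1$. $\langle w_0|w_1\rangle=1$ if $w_0\le w_1$, else $0$; $w_0\cdot w_1=\delta_{w_0,w_1}$. $H$ is the linear map with $\langle u|v\rangle=\langle v|Hu\rangle$ for all $u,v\in\mathcal{F}_n^e$; $Q_\pm$ are the linear maps with $u\cdot v=\langle u|Q_+v\rangle=\langle Q_-u|v\rangle$. $E^y_w$ is the set of $y$'s in $w$ immediately followed by an $x$; for $T\subseteq E^y_w$, $\psi^y_Tw$ replaces each such $yx$ (with $y\in T$) by $xy$. *)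

(* Defs.v *)
From mathcomp Require Import all_boot all_order all_algebra.
Set Implicit Arguments. Unset Strict Implicit. Unset Printing Implicit Defensive.
Import GRing.Theory Num.Theory.
Local Open Scope ring_scope.

(* Letters: false = x, true = y.  A word of M_n^e with n_x = nx, n_y = ny
   (n = nx + ny, e = ny - nx) is a sequence of length nx+ny with nx x's. *)
Definition lx : bool := false.
Definition ly : bool := true.

Definition word (nx ny : nat) :=
  {t : (nx + ny).-tuple bool | count (fun b => b == lx) t == nx}.

Definition xpos (s : seq bool) : seq nat :=
  [seq i <- iota 0 (size s) | nth ly s i == lx].

Definition wle nx ny (w0 w1 : word nx ny) : bool :=
  all2 (fun a b => (a <= b)%N) (xpos (val w0)) (xpos (val w1)).

(* Z-span F_n^e : integer vectors indexed by words; a word w is delta w *)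
Definition vec nx ny := word nx ny -> int.
Definition delta nx ny (w : word nx ny) : vec nx ny := fun u => (u == w)%:Z.

Definition braket nx ny (u v : vec nx ny) : int :=
  \sum_(a : word nx ny) \sum_(b : word nx ny) u a * v b * (wle a b)%:Z.

Definition dot nx ny (u v : vec nx ny) : int := \sum_(a : word nx ny) u a * v a.

(* linear maps F -> F, given by their matrices *)
Definition mat nx ny := word nx ny -> word nx ny -> int.
Definition app nx ny (M : mat nx ny) (v : vec nx ny) : vec nx ny :=
  fun a => \sum_(b : word nx ny) M a b * v b.

Definition Ey nx ny (w : word nx ny) : {set 'I_(nx + ny)} :=
  [set i : 'I_(nx + ny) | (nth lx (val w) i == ly) && (nth ly (val w) i.+1 == lx)].

(* psi^y_T s : replace each yx whose y is at a position of T by xy *)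
Definition psi n (T : {set 'I_n}) (s : seq bool) : seq bool :=
  let inT j := [exists i in T, nat_of_ord i == j] in
  mkseq (fun j => if inT j then lx
                  else if (0 < j)%N && inT j.-1 then ly
                  else nth lx s j) (size s).

Definition rhs nx ny (w : word nx ny) : vec nx ny :=
  fun u => \sum_(w' : word nx ny | wle w w')
             \sum_(T : {set 'I_(nx + ny)} | T \subset Ey w')
               (-1) ^+ #|T| * ((val u : seq bool) == psi T (val w'))%:Z.

(* Main.v *)
Require Import Defs.
From mathcomp Require Import all_boot all_order all_algebra zify.
Set Implicit Arguments. Unset Strict Implicit. Unset Printing Implicit Defensive.
Import GRing.Theory Num.Theory.

Lemma mem_xpos s i : (i \in xpos s) = (i < size s) && (nth ly s i == lx).
Proof. by rewrite /xpos mem_filter mem_iota add0n andbC. Qed.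

Lemma xpos_sorted s : sorted ltn (xpos s).
Proof. apply: sorted_filter; [exact: ltn_trans | exact: iota_ltn_sorted]. Qed.

Lemma size_xpos s : size (xpos s) = count (fun b => b == lx) s.
Proof.
rewrite /xpos size_filter -{3}(mkseq_nth ly s) /mkseq count_map.
by apply: eq_count.
Qed.

Lemma xpos_inj s1 s2 : size s1 = size s2 -> xpos s1 = xpos s2 -> s1 = s2.
Proof.
move=> hs hx; apply: (@eq_from_nth _ ly) => // i hi.
have := mem_xpos s1 i; rewrite hx mem_xpos -hs hi /= /lx.
by case: (nth ly s1 i); case: (nth ly s2 i).
Qed.

Definition tin n (T : {set 'I_n}) j := [exists i in T, nat_of_ord i == j].
Definition fsh n (T : {set 'I_n}) p := if (0 < p) && tin T p.-1 then p.-1 else p.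

Section Psi.
Variables (n : nat) (T : {set 'I_n}) (s : seq bool).

Lemma size_psi : size (psi T s) = size s.
Proof. by rewrite size_mkseq. Qed.

Lemma nth_psi j : j < size s -> nth ly (psi T s) j =
  if tin T j then lx else if (0 < j) && tin T j.-1 then ly else nth lx s j.
Proof. by move=> hj; rewrite /psi nth_mkseq. Qed.

Hypothesis hT : forall j, tin T j -> nth lx s j = ly /\ nth ly s j.+1 = lx.

Lemma xpos_psi : xpos (psi T s) = map (fsh T) (xpos s).
Proof.
apply: (irr_sorted_eq ltn_trans ltnn); first exact: xpos_sorted.
  apply: (homo_sorted_in _ (allss _) (xpos_sorted s)).
  move=> p q; rewrite !mem_xpos => /andP[hp sp] /andP[hq sq] pq.
  rewrite /fsh; case: ifP => Hp; case: ifP => Hq.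
  - by move/andP: Hp => [p0 _]; move/andP: Hq => [q0 _]; lia.
  - by move/andP: Hp => [p0 _]; lia.
  - move/andP: Hq => [q0 /hT [h1 _]].
    have : p != q.-1.
      apply/eqP => e; move: sp; rewrite e (set_nth_default lx) ?h1 //; lia.
    lia.
  - by [].
move=> j; rewrite mem_xpos size_psi; apply/idP/mapP.
  case/andP => hj; rewrite nth_psi //; case: ifP => tj.
    move=> _; have [_ h2] := hT tj.
    exists j.+1; last by rewrite /fsh /= tj.
    rewrite mem_xpos h2 eqxx andbT.
    by case: ltnP => // hge; move: h2; rewrite nth_default.
  case: ifP => tj1 // sj; exists j; last by rewrite /fsh tj1.
  by rewrite mem_xpos hj (set_nth_default lx).
case=> p; rewrite mem_xpos => /andP[hp sp] ->; rewrite /fsh; case: ifP => Hp.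
  have hp1 : p.-1 < size s by lia.
  by rewrite hp1 nth_psi //; move/andP: Hp => [_ ->].
rewrite hp nth_psi // Hp.
by case: ifP => tp //; rewrite (set_nth_default ly).
Qed.

Lemma count_psi : count (fun b => b == lx) (psi T s) = count (fun b => b == lx) s.
Proof. by rewrite -!size_xpos xpos_psi size_map. Qed.

End Psi.

Lemma all2_forall (r : nat -> nat -> bool) m (s t : seq nat) :
  size s = m -> size t = m ->
  all2 r s t = [forall k : 'I_m, r (nth 0 s k) (nth 0 t k)].
Proof.
elim: s t m => [|x s IH] [|y t] [|m] //= hs ht.
  by apply/esym/forallP => -[].
case: hs => hs; case: ht => ht.
rewrite (IH t m hs ht); apply/andP/forallP.
  case=> h1 /forallP h2 k; case: k => [[|k] hk] //=.
  exact: (h2 (Ordinal (hk : k < m))).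
move=> h; split; first exact: (h ord0).
by apply/forallP => k; have := h (lift ord0 k).
Qed.

Section Words.
Variables nx ny : nat.
Local Notation W := (word nx ny).

Lemma size_w (w : W) : size (val w : seq bool) = (nx + ny)%N.
Proof. exact: size_tuple. Qed.

Lemma sizex (w : W) : size (xpos (val w)) = nx.
Proof. by rewrite size_xpos; apply/eqP; exact: (valP w). Qed.

Lemma word_inj (a b : W) : (val a : seq bool) = val b -> a = b.
Proof. by move=> h; apply: val_inj; apply: val_inj. Qed.

Lemma tinE (w : W) (T : {set 'I_(nx + ny)}) : T \subset Ey w ->
  forall j, tin T j -> nth lx (val w) j = ly /\ nth ly (val w) j.+1 = lx.
Proof.
move=> /subsetP sT j /existsP[i /andP[iT /eqP <-]].
by move: (sT i iT); rewrite inE => /andP[/eqP -> /eqP ->].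
Qed.

Lemma psi_word (w : W) (T : {set 'I_(nx + ny)}) : T \subset Ey w ->
  exists c : W, (val c : seq bool) = psi T (val w).
Proof.
move=> sT.
have hsz : size (psi T (val w)) == (nx + ny)%N by rewrite size_psi size_w.
have hc : count (fun b => b == lx) (Tuple hsz) == nx.
  by rewrite /= count_psi; [exact: (valP w) | exact: tinE].
by exists (exist _ (Tuple hsz) hc).
Qed.

End Words.
Local Open Scope ring_scope.

Lemma alt_sum (I : finType) (X : {set I}) :
  \sum_(T : {set I} | T \subset X) (-1) ^+ #|T| = (X == set0)%:Z :> int.
Proof.
pose F i : int := if i \in X then -1 else 0.
have hd := @bigA_distr int 0 1 *%R +%R I F (fun _ => 1).
have h1 : \prod_i (F i + 1) = (X == set0)%:Z.
  case: (set_0Vmem X) => [X0|[x xX]].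
    by rewrite X0 eqxx big1 // => i _; rewrite /F X0 inE add0r.
  have -> : (X == set0) = false by apply/negbTE/set0Pn; exists x.
  by rewrite (bigD1 x) //= /F xX addNr mul0r.
rewrite -h1 hd big_mkcond /=; apply: eq_bigr => J _.
rewrite -big_mkcond /=; case: ifP => sJ.
  rewrite (eq_bigr (fun _ => -1)); first by rewrite prodr_const.
  by move=> i iJ; rewrite /F (subsetP sJ i iJ).
have [i iJ iX] : exists2 i, i \in J & i \notin X.
  move/negbT: sJ => /subsetPn [i iJ iX]; by exists i.
by rewrite (bigD1 i) //= /F (negbTE iX) mul0r.
Qed.

Section Key.
Variables (nx ny : nat) (b w : word nx ny).
Local Notation la := (xpos (val b)).
Local Notation lw := (xpos (val w)).
Definition SS := [set i : 'I_(nx + ny) |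
  [forall k : 'I_nx, (nth 0%N lw k == i.+1) ==> (nth 0%N la k <= i)%N]].
Definition AA := [forall k : 'I_nx, (nth 0%N la k <= nth 0%N lw k)%N].

Lemma step1 (T : {set 'I_(nx + ny)}) : T \subset Ey w ->
  all2 leq la (xpos (psi T (val w))) = AA && (T \subset SS).
Proof.
move=> sT; rewrite xpos_psi; last exact: tinE.
rewrite (@all2_forall _ nx) ?sizex ?size_map ?sizex //.
apply/forallP/andP.
  move=> h; split.
    apply/forallP => k; have := h k; rewrite (nth_map 0%N) ?sizex //.
    move/leq_trans; apply; rewrite /fsh; case: ifP => _ //; exact: leq_pred.
  apply/subsetP => i iT; rewrite inE; apply/forallP => k; apply/implyP => /eqP e.
  have := h k; rewrite (nth_map 0%N) ?sizex // e /fsh /=.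
  suff -> : tin T i by [].
  by apply/existsP; exists i; rewrite iT eqxx.
case=> /forallP hA /subsetP hS k.
rewrite (nth_map 0%N) ?sizex // /fsh.
case: ifP => [/andP[p0 /existsP[i /andP[iT /eqP ie]]] | _]; last exact: hA.
have := hS i iT; rewrite inE => /forallP /(_ k) /implyP.
by rewrite ie prednK //; apply.
Qed.

Lemma uniq_xpos s : uniq (xpos s).
Proof. exact: (sorted_uniq ltn_trans ltnn (xpos_sorted s)). Qed.

Lemma ltn_xpos s i j : (i < size (xpos s))%N -> (j < size (xpos s))%N -> (i < j)%N ->
  (nth 0%N (xpos s) i < nth 0%N (xpos s) j)%N.
Proof.
by move=> hi hj ij; apply: (sorted_ltn_nth ltn_trans 0%N (xpos_sorted s)).
Qed.

Lemma step2 : AA && (Ey w :&: SS == set0) = (b == w).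
Proof.
apply/idP/idP; last first.
  move/eqP => e; rewrite /AA /SS e; apply/andP; split; first by apply/forallP => k.
  apply/eqP/setP => i; rewrite !inE; apply/negbTE; apply/andP => -[hE hP].
  case/andP: hE => _ hx.
  have hm : i.+1 \in xpos (val w).
    rewrite mem_xpos hx andbT; case: ltnP => // hge.
    by move: hx; rewrite nth_default.
  have hk : (index i.+1 (xpos (val w)) < nx)%N by move: hm; rewrite -index_mem sizex.
  by move/forallP: hP => /(_ (Ordinal hk)) /=; rewrite nth_index // eqxx /= ltnn.
case/andP => /forallP hA /eqP hE.
have hS : forall i : 'I_(nx + ny), i \in Ey w ->
    exists k : 'I_nx, (nth 0%N lw k == i.+1) && (i < nth 0%N la k)%N.
  move=> i iE; apply/existsP; apply: contraT => hne.
  have : i \in Ey w :&: SS.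
    rewrite inE iE inE; apply/forallP => k; apply/implyP => e.
    by move/existsPn: hne => /(_ k); rewrite e /= -leqNgt.
  by rewrite hE inE.
have eqk : forall k, (k < nx)%N -> nth 0%N la k = nth 0%N lw k.
  elim/ltn_ind => k IH hk; apply/eqP; rewrite eqn_leq (hA (Ordinal hk)) /=.
  case e: (nth 0%N lw k) => [|q] //.
  have hq1 : q.+1 \in lw by rewrite -e mem_nth // sizex.
  move: hq1; rewrite mem_xpos => /andP[hqs hqx].
  have hqs' : (q < nx + ny)%N by rewrite -(size_w w); lia.
  case sq: (nth lx (val w) q).
    have iE : Ordinal hqs' \in Ey w by rewrite inE /= sq hqx /ly.
    have [k' /andP[/eqP e' lt']] := hS _ iE; move: e' lt' => /= e' lt'.
    have kk : k' = k :> nat.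
      apply/eqP; rewrite -(nth_uniq 0%N _ _ (uniq_xpos (val w))) ?sizex //.
      by rewrite e e'.
    by rewrite -kk.
  have hq : q \in lw by rewrite mem_xpos size_w hqs' (set_nth_default lx) ?sq ?size_w.
  have hj : (index q lw < nx)%N by move: hq; rewrite -index_mem sizex.
  have ej : nth 0%N lw (index q lw) = q by rewrite nth_index.
  have jk : (index q lw < k)%N.
    rewrite ltnNge; apply/negP; rewrite leq_eqVlt => /orP[/eqP kj|kj].
      by move: e; rewrite kj ej => /n_Sn.
    have := @ltn_xpos (val w) k (index q lw); rewrite !sizex e ej => /(_ hk hj kj).
    by rewrite ltnNge leqnSn.
  have := @ltn_xpos (val b) (index q lw) k; rewrite !sizex IH // ej; exact.
apply/eqP/word_inj/xpos_inj; first by rewrite !size_w.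
apply: (@eq_from_nth _ 0%N); first by rewrite !sizex.
by move=> k; rewrite sizex; exact: eqk.
Qed.

Lemma keyC : \sum_(T : {set 'I_(nx + ny)} | T \subset Ey w)
   (-1) ^+ #|T| * (all2 leq la (xpos (psi T (val w))))%:Z = (b == w)%:Z :> int.
Proof.
rewrite (eq_bigr (fun T : {set 'I_(nx + ny)} => (AA)%:Z * (if T \subset SS then (-1) ^+ #|T| else 0)));
  last first.
  by move=> T sT; rewrite step1 //; case: AA; case: (T \subset SS);
     rewrite ?mulr1 ?mulr0 ?mul1r ?mul0r.
rewrite -mulr_sumr -big_mkcondr /=.
rewrite (eq_bigl (fun T : {set 'I_(nx + ny)} => T \subset Ey w :&: SS)); last by move=> T; rewrite subsetI.
rewrite alt_sum -step2. by case: (AA) => /=; rewrite ?mul1r ?mul0r.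
Qed.

End Key.
Local Open Scope ring_scope.

Section Lin.
Variables nx ny : nat.
Local Notation W := (word nx ny).
Local Notation L a b := ((wle a b)%:Z).

Lemma sum_dl (x : W) (G : W -> int) : \sum_a (a == x)%:Z * G a = G x.
Proof.
rewrite (bigD1 x) //= eqxx mul1r big1 ?addr0 // => a /negbTE ->; exact: mul0r.
Qed.

Lemma sum_dr (x : W) (G : W -> int) : \sum_a G a * (a == x)%:Z = G x.
Proof. by rewrite -(sum_dl x G); apply: eq_bigr => a _; rewrite mulrC. Qed.

Lemma assoc_sum (F : W -> int) (G : W -> W -> int) (K : W -> int) :
  \sum_b F b * \sum_c G b c * K c = \sum_c (\sum_b F b * G b c) * K c.
Proof.
under eq_bigr do rewrite mulr_sumr.
rewrite exchange_big; apply: eq_bigr => c _; rewrite mulr_suml.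
by apply: eq_bigr => b _; rewrite mulrA.
Qed.

Lemma braket_dl (x : W) (v : vec nx ny) :
  braket (delta x) v = \sum_b v b * L x b.
Proof.
rewrite /braket (eq_bigr (fun a => (a == x)%:Z * \sum_b v b * L a b)).
  by rewrite sum_dl.
by move=> a _; rewrite mulr_sumr; apply: eq_bigr => b _; rewrite mulrA.
Qed.

Lemma braket_dr (u : vec nx ny) (y : W) :
  braket u (delta y) = \sum_a u a * L a y.
Proof.
rewrite /braket; apply: eq_bigr => a _.
rewrite (eq_bigr (fun b => (b == y)%:Z * (u a * L a b))).
  by rewrite sum_dl.
by move=> b _; rewrite /delta mulrCA mulrA.
Qed.

Lemma app_d (M : mat nx ny) (x a : W) : app M (delta x) a = M a x.
Proof. by rewrite /app sum_dr. Qed.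

Lemma dot_d (x y : W) : dot (delta x) (delta y) = (x == y)%:Z.
Proof. by rewrite /dot /delta sum_dl eq_sym. Qed.

Lemma inner (b w' : W) (T : {set 'I_(nx + ny)}) : T \subset Ey w' ->
  \sum_(c : W) L b c * ((val c : seq bool) == psi T (val w'))%:Z =
  (all2 leq (xpos (val b)) (xpos (psi T (val w'))))%:Z.
Proof.
move=> sT; have [c0 hc0] := psi_word sT.
rewrite (bigD1 c0) //= -hc0 eqxx mulr1 big1 ?addr0 //.
move=> c ne; suff -> : ((val c : seq bool) == val c0) = false by rewrite mulr0.
by apply/negbTE; apply: contra ne => /eqP /word_inj ->.
Qed.

Lemma KEY (w b : W) : \sum_c L b c * rhs w c = L w b.
Proof.
rewrite /rhs.
under eq_bigr do rewrite mulr_sumr.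
rewrite exchange_big /=.
rewrite (eq_bigr (fun w' => (w' == b)%:Z)); last first.
  move=> w' ww'.
under eq_bigr do rewrite mulr_sumr.
rewrite exchange_big /=.
rewrite (eq_bigr (fun T : {set 'I_(nx + ny)} => (-1) ^+ #|T| *
   (all2 leq (xpos (val b)) (xpos (psi T (val w')))) %:Z)); last first.
  move=> T sT; rewrite -inner // mulr_sumr; apply: eq_bigr => c _.
  by rewrite mulrCA.
  by rewrite keyC eq_sym.
rewrite big_mkcond /= (eq_bigr (fun w' => (w' == b)%:Z * L w w')) ?sum_dl //.
by move=> w' _; case: ifP => h; rewrite ?mulr1 ?mulr0.
Qed.

End Lin.
Unset Implicit Arguments.

Theorem mainTheorem6 (nx ny : nat) (H Qp Qm : mat nx ny) :
  (forall u v : vec nx ny, braket u v = braket v (app H u)) ->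
  (forall u v : vec nx ny, dot u v = braket u (app Qp v)) ->
  (forall u v : vec nx ny, dot u v = braket (app Qm u) v) ->
  exists Qmi : mat nx ny,
    (forall v, app Qm (app Qmi v) =1 v) /\
    (forall v, app Qmi (app Qm v) =1 v) /\
    (forall w : word nx ny,
       app H (delta w) =1 app Qp (app Qmi (delta w)) /\
       app Qp (app Qmi (delta w)) =1 rhs w).
Proof.
move=> hH0 hQp0 hQm0.
have hH : forall a b, (wle a b)%:Z = \sum_d H d a * (wle b d)%:Z.
  move=> a b; have := hH0 (delta a) (delta b).
  rewrite !braket_dl.
  rewrite (eq_bigr (fun d => (d == b)%:Z * (wle a d)%:Z)) ?sum_dl; last first.
    by move=> d _; rewrite /delta.
  move=> ->; apply: eq_bigr => d _; by rewrite app_d.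
have hQp : forall a b, (a == b)%:Z = \sum_d Qp d b * (wle a d)%:Z.
  move=> a b; rewrite -dot_d hQp0 braket_dl.
  by apply: eq_bigr => d _; rewrite app_d.
have hQm : forall a b, (a == b)%:Z = \sum_c Qm c a * (wle c b)%:Z.
  move=> a b; rewrite -dot_d hQm0 braket_dr.
  by apply: eq_bigr => d _; rewrite app_d.
have QpQm : forall d e, Qp d e = Qm e d.
  move=> d e; rewrite -(sum_dr e (fun b => Qm b d)).
  under eq_bigr do rewrite hQp.
  under eq_bigr do under eq_bigr do rewrite mulrC.
  rewrite assoc_sum -(sum_dl d (fun c => Qp c e)).
  by apply: eq_bigr => c _; rewrite eq_sym (hQm d c).
have QpL : forall a c, \sum_b Qp a b * (wle b c)%:Z = (a == c)%:Z.
  move=> a c; rewrite hQm; apply: eq_bigr => b _; by rewrite QpQm.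
exists (fun a b => (wle b a)%:Z); split; last split.
- move=> v a; rewrite /app assoc_sum -(sum_dl a v).
  apply: eq_bigr => c _; congr (_ * _).
  rewrite (hQp c a); apply: eq_bigr => b _; by rewrite QpQm mulrC.
- move=> v a; rewrite /app assoc_sum -(sum_dl a v).
  apply: eq_bigr => c _; congr (_ * _).
  rewrite (hQm c a); apply: eq_bigr => b _; by rewrite mulrC.
move=> w; split => a.
  rewrite app_d {1}/app.
  under [RHS]eq_bigr do rewrite app_d hH.
  under [RHS]eq_bigr do under eq_bigr do rewrite mulrC.
  rewrite assoc_sum -(sum_dl a (fun c => H c w)).
  by apply: eq_bigr => c _; rewrite QpL eq_sym.
rewrite {1}/app.
under eq_bigr do rewrite app_d.
rewrite -(sum_dl a (rhs w)).
under [RHS]eq_bigr do rewrite eq_sym -QpL.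
rewrite -assoc_sum; apply: eq_bigr => b _.
by rewrite KEY.
Qed.
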